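(* Let $(\mathsf P,\mathcal O)$ be a semitopology. Then the map $\mathrm{nbhd}:\mathsf P\to\mathrm{Points}(\mathcal O,\subseteq,\between)$, $p\mapsto\{O\in\mathcal O\mid p\in O\}$, is a continuous map from $(\mathsf P,\mathcal O)$ to $\mathrm{St}(\mathcal O,\subseteq,\between)$; the semitopology $\mathrm{St}(\mathcal O,\subseteq,\between)$ is sober; and $\mathrm{nbhd}^{-1}$ maps each open set $\mathrm{Op}(O)$ of $\mathrm{St}(\mathcal O,\subseteq,\between)$ to $O$, giving a bijection between the open sets of $\mathrm{St}(\mathcal O,\subseteq,\between)$ and $\mathcal O$ which preserves and reflects both subset inclusion and nonempty intersection (an isomorphism of semiframes).
   Context: A semitopology is a set $\mathsf P$ with $\mathcal O\subseteq\mathcal P(\mathsf P)$ containing $\varnothing,\mathsf P$ and closed under arbitrary unions; a map between semitopologies is continuous when preimages of open sets are open. $(\mathcal O,\subseteq,\between)$, with $O\between O'$ iff $O\cap O'\neq\varnothing$, is a semiframe. In a semiframe (complete join-semilattice $(X,\le)$ with commutative $\ast$, $x\ast x$ for $x\neq\bot$, and $x\ast\bigvee Y$ iff $\exists y\in Y.\,x\ast y$), an abstract point is a nonempty, up-closed, pairwise $\ast$-compatible, completely prime subset ($\bigvee Y\in F\Rightarrow\exists y\in Y.\,y\in F$, for all $Y$ including $\varnothing$); $\mathrm{Points}(X,\le,\ast)$ is the set of abstract points; $\mathrm{Op}(x)$ is the set of abstract points containing $x$; $\mathrm{St}(X,\le,\ast)$ is the semitopology with points $\mathrm{Points}(X,\le,\ast)$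 and opens $\{\mathrm{Op}(x)\mid x\in X\}$. A semitopology is sober when $\mathrm{nbhd}$ is a bijection from its points onto the abstract points of its semiframe of open sets. *)

(* Defs.v *)
From mathcomp Require Import all_boot.
From mathcomp Require Import boolp classical_sets.
Set Implicit Arguments. Unset Strict Implicit. Unset Printing Implicit Defensive.
Local Open Scope classical_set_scope.

Definition semitopology (P : Type) (O : set (set P)) : Prop :=
  O set0 /\ O setT /\ (forall S : set (set P), S `<=` O -> O (\bigcup_(A in S) A)).

Definition scontinuous (P Q : Type) (OP : set (set P)) (OQ : set (set Q))
  (f : P -> Q) : Prop := forall V, OQ V -> OP (f @^-1` V).

Definition is_join (X : Type) (le : X -> X -> Prop) (Y : set X) (x : X) : Prop :=
  (forall y, Y y -> le y x) /\ (forall z, (forall y, Y y -> le y z) -> le x z).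

(* abstract point: nonempty, up-closed, pairwise compatible, completely prime
   (for all Y, including the empty family) *)
Definition abstract_point (X : Type) (le compat : X -> X -> Prop) (F : set X) : Prop :=
  (exists x, F x) /\
  (forall x y, F x -> le x y -> F y) /\
  (forall x y, F x -> F y -> compat x y) /\
  (forall (Y : set X) (x : X), is_join le Y x -> F x -> exists y, Y y /\ F y).

Definition Points (X : Type) (le compat : X -> X -> Prop) : Type :=
  {F : set X | abstract_point le compat F}.

Definition Op (X : Type) (le compat : X -> X -> Prop) (x : X) : set (Points le compat) :=
  fun F => proj1_sig F x.

Definition St_opens (X : Type) (le compat : X -> X -> Prop) : set (set (Points le compat)) :=
  fun U => exists x, U = @Op X le compat x.

Definition opens_of (P : Type) (O : set (set P)) : Type := {U : set P | O U}.

Definition oleq (P : Type) (O : set (set P)) (U V : opens_of O) : Prop :=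
  proj1_sig U `<=` proj1_sig V.

Definition ocompat (P : Type) (O : set (set P)) (U V : opens_of O) : Prop :=
  proj1_sig U `&` proj1_sig V !=set0.

Definition nbhd (P : Type) (O : set (set P)) (p : P) : set (opens_of O) :=
  fun U => proj1_sig U p.
Arguments nbhd {P} O p.

Definition OPoints (P : Type) (O : set (set P)) : Type := Points (@oleq _ O) (@ocompat _ O).

Definition OOp (P : Type) (O : set (set P)) (U : opens_of O) : set (OPoints O) :=
  @Op _ (@oleq _ O) (@ocompat _ O) U.

Definition OSt (P : Type) (O : set (set P)) : set (set (OPoints O)) :=
  @St_opens _ (@oleq _ O) (@ocompat _ O).

Definition sober (P : Type) (O : set (set P)) : Prop :=
  (forall p, abstract_point (@oleq _ O) (@ocompat _ O) (nbhd O p)) /\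
  injective (nbhd O) /\
  (forall F, abstract_point (@oleq _ O) (@ocompat _ O) F -> exists p, nbhd O p = F).
Arguments OSt {P} O _.

(* Main.v *)
Require Import Defs.
From mathcomp Require Import all_boot.
From mathcomp Require Import boolp classical_sets.
Local Open Scope classical_set_scope.

Lemma sig_eq (A : Type) (Pr : A -> Prop) (a b : {x | Pr x}) :
  proj1_sig a = proj1_sig b -> a = b.
Proof.
case: a => a pa; case: b => b pb /= E; subst b.
by rewrite (Prop_irrelevance pa pb).
Qed.

Section Generic.
Variables (Q : Type) (OQ : set (set Q)) (hs : semitopology OQ).

Lemma union_join (Y : set (opens_of OQ)) : exists u : opens_of OQ,
  is_join (@oleq _ OQ) Y u /\
  (forall q, proj1_sig u q <-> exists y, Y y /\ proj1_sig y q).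
Proof.
have Hopen : OQ (\bigcup_(A in [set proj1_sig y | y in Y]) A).
  apply: hs.2.2. by move=> A [y _ <-]; exact: proj2_sig y.
exists (exist (fun U => OQ U) _ Hopen); split; last first.
  move=> q /=; split.
    by case=> A [y Yy <-] Aq; exists y.
  by case=> y [Yy yq]; exists (proj1_sig y) => //; exists y.
split.
  by move=> y Yy q yq /=; exists (proj1_sig y) => //; exists y.
by move=> z Hz q /= [A [y Yy <-] Aq]; exact: Hz y Yy q Aq.
Qed.

Lemma join_sub Y x : is_join (@oleq _ OQ) Y x ->
  forall q, proj1_sig x q -> exists y, Y y /\ proj1_sig y q.
Proof.
move=> [Hub Hl] q Hq.
have [u [Ju Hu]] := union_join Y.
apply/Hu. exact: Hl u Ju.1 q Hq.
Qed.

Lemma nbhd_pt q : abstract_point (@oleq _ OQ) (@ocompat _ OQ) (nbhd OQ q).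
Proof.
split. by exists (exist (fun U => OQ U) setT hs.2.1).
split. by move=> x y xq xy; exact: xy _ xq.
split. by move=> x y xq yq; exists q.
by move=> Y x J xq; exact: join_sub J q xq.
Qed.
End Generic.

Section Main.
Variables (P : Type) (O : set (set P)) (hs : semitopology O).

Definition top : opens_of O := exist (fun U => O U) setT hs.2.1.
Definition bot : opens_of O := exist (fun U => O U) set0 hs.1.

Lemma pt_top (F : OPoints O) : proj1_sig F top.
Proof. case: F => F [[x Fx] [Hup _]] /=. by apply: Hup Fx _ => p _. Qed.

Lemma pt_bot (F : OPoints O) : ~ proj1_sig F bot.
Proof.
case: F => F [_ [_ [_ Hp]]] /= H.
have J : is_join (@oleq _ O) set0 bot.
  by split; [move=> ? [] | move=> z _ p []].
by case: (Hp _ _ J H) => y [].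
Qed.

Lemma Op_join Y u : is_join (@oleq _ O) Y u ->
  forall F : OPoints O, OOp u F <-> exists y, Y y /\ OOp y F.
Proof.
move=> J F; split.
  case: F => F [_ [_ [_ Hp]]] /= Fu. exact: Hp _ _ J Fu.
case=> y [Yy Fy]. case: F Fy => F [_ [Hup _]] /= Fy.
exact: Hup _ _ Fy (J.1 y Yy).
Qed.

Lemma Op_union (S : set (set (OPoints O))) : S `<=` OSt O -> OSt O (\bigcup_(A in S) A).
Proof.
move=> HS.
have [u [Ju _]] := @union_join _ O hs (fun x : opens_of O => S (OOp x)).
exists u. apply/funext => F; apply/propext; split.
  case=> W SW WF. case: (HS W SW) => x Ex. subst W.
  by apply: (proj2 (Op_join _ _ Ju F)); exists x.
by move=> /(proj1 (Op_join _ _ Ju F)) [y [Yy Fy]]; exists (OOp y).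
Qed.

Lemma St_semi : semitopology (OSt O).
Proof.
split. exists bot. apply/funext => F; apply/propext; split => //. exact: pt_bot.
split. exists top. apply/funext => F; apply/propext; split => // _. exact: pt_top.
move=> S HS. exact: Op_union.
Qed.

Definition Wof (x : opens_of O) : opens_of (OSt O) :=
  exist (fun W => OSt O W) (OOp x) (ex_intro _ x erefl).

Lemma St_sober : sober (OSt O).
Proof.
split. move=> F; exact: (nbhd_pt _ _ St_semi F).
split.
  move=> F G H. apply: sig_eq. apply/funext => x; apply/propext.
  have E : sval F x = sval G x := congr1 (fun N => N (Wof x)) H. by rewrite E.
move=> Phi [[W0 PW0] [Pup [Pcomp Pprime]]].
pose Fs := fun x : opens_of O => Phi (Wof x).
have Hpt : abstract_point (@oleq _ O) (@ocompat _ O) Fs.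
  split.
    case: (proj2_sig W0) => x Ex. exists x. rewrite /Fs.
    by have <- : W0 = Wof x by apply: sig_eq.
  split.
    move=> x y Fx xy. apply: Pup Fx _ => G /=.
    case: G => G [_ [Gup _]] /= Gx. exact: Gup _ _ Gx xy.
  split.
    move=> x y Fx Fy. case: (Pcomp _ _ Fx Fy) => G [/= Gx Gy].
    case: G Gx Gy => G [_ [_ [Gc _]]] /= Gx Gy. exact: Gc _ _ Gx Gy.
  move=> Y x J Fx.
  pose Y' := fun W => exists y, Y y /\ W = Wof y.
  have J' : is_join (@oleq _ (OSt O)) Y' (Wof x).
    split.
      move=> W [y [Yy ->]] G /= Gy. apply: (proj2 (Op_join _ _ J G)). by exists y.
    move=> Z HZ G /= /(proj1 (Op_join _ _ J G)) [y [Yy Gy]].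
    apply: (HZ (Wof y)); last by [].
    by exists y.
  case: (Pprime _ _ J' Fx) => W [[y [Yy ->]] Py]. by exists y.
exists (exist _ Fs Hpt). apply/funext => W; apply/propext.
case: (proj2_sig W) => x Ex.
have -> : W = Wof x by apply: sig_eq.
by [].
Qed.

End Main.

Theorem theorem8p5 (P : Type) (O : set (set P)) :
  semitopology O ->
  exists f : P -> OPoints O,
    (forall p : P, proj1_sig (f p) = nbhd O p) /\
    scontinuous O (OSt O) f /\
    semitopology (OSt O) /\
    sober (OSt O) /\
    (forall U : opens_of O, f @^-1` (OOp U) = proj1_sig U) /\
    (forall U V : opens_of O, OOp U = OOp V -> U = V) /\
    (forall W, OSt O W -> exists U : opens_of O, W = OOp U) /\
    (forall U V : opens_of O, proj1_sig U `<=` proj1_sig V <-> OOp U `<=` OOp V) /\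
    (forall U V : opens_of O,
        proj1_sig U `&` proj1_sig V !=set0 <-> OOp U `&` OOp V !=set0).
Proof.
move=> hs.
pose f := fun p => exist (abstract_point (@oleq _ O) (@ocompat _ O)) (nbhd O p) (@nbhd_pt _ O hs p).
exists f.
split. by [].
split. by move=> V [x ->]; exact: proj2_sig x.
split. exact: St_semi hs.
split. exact: St_sober hs.
split. by [].
split.
  move=> U V E. apply: sig_eq. apply/funext => p; apply/propext.
  have E2 : sval U p = sval V p := congr1 (fun W => W (f p)) E. by rewrite E2.
split. by move=> W [x ->]; exists x.
split.
  move=> U V; split.
    move=> UV F. case: F => F [_ [Fup _]] /= FU. exact: Fup _ _ FU UV.
  by move=> H p Up; exact: (H (f p)).
move=> U V; split.
  by case=> p [Up Vp]; exists (f p).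
case=> F [FU FV]. case: F FU FV => F [_ [_ [Fc _]]] /= FU FV. exact: Fc _ _ FU FV.
Qed.
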